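(* For every $n\ge2$ and all masses $m_1,\dots,m_n>0$, the $n$-body problem in ${\bf H}^2$ has no fixed points: there is no collisionless configuration ${\bf q}^0\in({\bf H}^2)^n$ such that the constant function ${\bf q}(t)\equiv{\bf q}^0$ solves the equations of motion.
   Context: The $n$-body problem in ${\bf H}^2$ (Weierstrass model): with the Lorentz inner product ${\bf a}\boxdot{\bf b}=a_xb_x+a_yb_y-a_zb_z$ on $\mathbb R^3$, ${\bf H}^2=\{(x,y,z): x^2+y^2-z^2=-1,\ z>0\}$. Bodies of masses $m_1,\dots,m_n>0$ have positions ${\bf q}_i=(x_i,y_i,z_i)\in{\bf H}^2$ and satisfy $$\ddot{\bf q}_i=\sum_{j\ne i}\frac{m_j[{\bf q}_j+({\bf q}_i\boxdot{\bf q}_j){\bf q}_i]}{[({\bf q}_i\boxdot{\bf q}_j)^2-1]^{3/2}}+(\dot{\bf q}_i\boxdot\dot{\bf q}_i){\bf q}_i,\qquad {\bf q}_i\boxdot{\bf q}_i=-1,\ \ {\bf q}_i\boxdot\dot{\bf q}_i=0,$$ $i=1,\dots,n$, defined only for collisionless configurations (${\bf q}_i\ne{\bf q}_j$, equivalently ${\bf q}_i\boxdot{\bf q}_j\ne-1$, for $i\ne j$). These come from the force function $\sum_{i<j}m_im_j\coth d({\bf q}_i,{\bf q}_j)$ with $d$ the hyperbolic distance $\cosh^{-1}(-{\bf q}_i\boxdot{\bf q}_j)$. *)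

(* Defs.v *)
From Stdlib Require Import Reals.
Open Scope R_scope.

Record V3 := mkV3 { vx : R; vy : R; vz : R }.

Definition vzero : V3 := mkV3 0 0 0.
Definition vadd (a b : V3) : V3 := mkV3 (vx a + vx b) (vy a + vy b) (vz a + vz b).
Definition vscale (c : R) (a : V3) : V3 := mkV3 (c * vx a) (c * vy a) (c * vz a).

Definition lor (a b : V3) : R := vx a * vx b + vy a * vy b - vz a * vz b.

Definition onH2 (p : V3) : Prop := lor p p = -1 /\ 0 < vz p.

Definition collisionless (n : nat) (q : nat -> V3) : Prop :=
  forall i j, (i < n)%nat -> (j < n)%nat -> i <> j -> q i <> q j.

Fixpoint vsum (f : nat -> V3) (n : nat) : V3 :=
  match n with
  | O => vzero
  | S k => vadd (vsum f k) (f k)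
  end.

Definition force_term (m : nat -> R) (q : nat -> V3) (i j : nat) : V3 :=
  vscale (m j / Rpower ((lor (q i) (q j)) ^ 2 - 1) (3 / 2))
         (vadd (q j) (vscale (lor (q i) (q j)) (q i))).

Definition force (n : nat) (m : nat -> R) (q : nat -> V3) (i : nat) : V3 :=
  vsum (fun j => if Nat.eq_dec j i then vzero else force_term m q i j) n.

Definition has_deriv (f f' : R -> V3) : Prop :=
  forall t, derivable_pt_lim (fun s => vx (f s)) t (vx (f' t)) /\
            derivable_pt_lim (fun s => vy (f s)) t (vy (f' t)) /\
            derivable_pt_lim (fun s => vz (f s)) t (vz (f' t)).

Definition is_solution (n : nat) (m : nat -> R) (q : nat -> R -> V3) : Prop :=
  exists v a : nat -> R -> V3,
    (forall i, (i < n)%nat -> has_deriv (q i) (v i) /\ has_deriv (v i) (a i)) /\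
    (forall t,
      collisionless n (fun i => q i t) /\
      forall i, (i < n)%nat ->
        onH2 (q i t) /\ lor (q i t) (v i t) = 0 /\
        a i t = vadd (force n m (fun j => q j t) i)
                     (vscale (lor (v i t) (v i t)) (q i t))).

(* Main.v *)
Require Import Defs.
From Stdlib Require Import Reals Lra Psatz FunctionalExtensionality.
Open Scope R_scope.

Lemma lor_lt (p q : V3) : onH2 p -> onH2 q -> p <> q -> lor p q < -1.
Proof.
  destruct p as [x1 y1 z1], q as [x2 y2 z2]; unfold onH2, lor; simpl.
  intros [H1 P1] [H2 P2] Hne.
  destruct (Rlt_or_le (x1*x2+y1*y2-z1*z2) (-1)) as [h|h]; [exact h|].
  exfalso; apply Hne.
  assert (E1 : z1*z1 = 1 + x1*x1 + y1*y1) by lra.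
  assert (E2 : z2*z2 = 1 + x2*x2 + y2*y2) by lra.
  assert (Hp : 0 < z1*z2) by (apply Rmult_lt_0_compat; lra).
  assert (Hs : (z1*z2)*(z1*z2) <= (1+x1*x2+y1*y2)*(1+x1*x2+y1*y2)) by nra.
  assert (Hid : (z1*z2)*(z1*z2) = (1+x1*x2+y1*y2)*(1+x1*x2+y1*y2)
     + (x1-x2)*(x1-x2) + (y1-y2)*(y1-y2) + (x1*y2-x2*y1)*(x1*y2-x2*y1)).
  { replace ((z1*z2)*(z1*z2)) with ((z1*z1)*(z2*z2)) by ring. rewrite E1, E2. ring. }
  pose proof (Rle_0_sqr (x1-x2)) as S1. pose proof (Rle_0_sqr (y1-y2)) as S2.
  pose proof (Rle_0_sqr (x1*y2-x2*y1)) as S3. unfold Rsqr in *.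
  assert (Tx : (x1-x2)*(x1-x2) = 0) by lra.
  assert (Ty : (y1-y2)*(y1-y2) = 0) by lra.
  apply Rmult_integral in Tx. apply Rmult_integral in Ty.
  assert (Hx : x1 = x2) by (destruct Tx; lra).
  assert (Hy : y1 = y2) by (destruct Ty; lra).
  subst. assert (Z : (z1-z2)*(z1+z2) = 0) by nra.
  apply Rmult_integral in Z. assert (z1 = z2) by (destruct Z; lra). subst. reflexivity.
Qed.

Lemma vz_vsum_neg (f : nat -> V3) (n : nat) :
  (forall j, (j < n)%nat -> vz (f j) <= 0) ->
  (exists j, (j < n)%nat /\ vz (f j) < 0) -> vz (vsum f n) < 0.
Proof.
  induction n as [|n IH]; intros Hle [j [Hj Hneg]]; [lia|].
  simpl. assert (Hfn : vz (f n) <= 0) by (apply Hle; lia).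
  destruct (Nat.eq_dec j n) as [->|Hjn].
  - assert (vz (vsum f n) <= 0).
    { clear IH Hj Hneg Hfn. induction n as [|k IHk]; simpl; [lra|].
      assert (vz (f k) <= 0) by (apply Hle; lia).
      assert (vz (vsum f k) <= 0) by (apply IHk; intros; apply Hle; lia). lra. }
    lra.
  - assert (vz (vsum f n) < 0).
    { apply IH. intros; apply Hle; lia. exists j; split; [lia|exact Hneg]. }
    lra.
Qed.

Lemma max_z (q : nat -> V3) (n : nat) : (1 <= n)%nat ->
  exists i, (i < n)%nat /\ forall j, (j < n)%nat -> vz (q j) <= vz (q i).
Proof.
  induction n as [|n IH]; intros Hn; [lia|].
  destruct n as [|n].
  - exists 0%nat; split; [lia|]. intros j Hj. assert (j = 0%nat) by lia. subst; lra.
  - destruct IH as [i [Hi Hm]]; [lia|].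
    destruct (Rle_dec (vz (q (S n))) (vz (q i))) as [h|h].
    + exists i; split; [lia|]. intros j Hj.
      destruct (Nat.eq_dec j (S n)) as [->|]; [exact h|apply Hm; lia].
    + exists (S n); split; [lia|]. intros j Hj.
      destruct (Nat.eq_dec j (S n)) as [->|]; [lra|].
      assert (vz (q j) <= vz (q i)) by (apply Hm; lia). lra.
Qed.

Lemma deriv_const_zero (c : R) (g : R -> R) :
  (forall t, derivable_pt_lim (fun _ => c) t (g t)) -> forall t, g t = 0.
Proof.
  intros H t. apply (uniqueness_limite (fun _ => c) t).
  apply H. apply derivable_pt_lim_const.
Qed.

Lemma term_neg (m : nat -> R) (q : nat -> V3) (i j : nat) :
  0 < m j -> onH2 (q i) -> onH2 (q j) -> q i <> q j -> vz (q j) <= vz (q i) ->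
  vz (force_term m q i j) < 0.
Proof.
  intros Hm Hi Hj Hne Hz. unfold force_term, vscale, vadd; cbn [vz vx vy].
  assert (Hl : lor (q i) (q j) < -1) by (apply lor_lt; auto).
  assert (Hc : 0 < m j / Rpower ((lor (q i) (q j)) ^ 2 - 1) (3 / 2)).
  { unfold Rdiv. apply Rmult_lt_0_compat; [exact Hm|]. apply Rinv_0_lt_compat.
    unfold Rpower. apply exp_pos. }
  destruct Hi as [_ Pi].
  assert (vz (q j) + lor (q i) (q j) * vz (q i) < 0) by nra.
  revert Hc H. generalize (m j / Rpower ((lor (q i) (q j)) ^ 2 - 1) (3 / 2)).
  generalize (vz (q j) + lor (q i) (q j) * vz (q i)). intros X c Hc HX.
  nra.
Qed.

Theorem mainTheorem12 :
  forall (n : nat) (m : nat -> R) (q0 : nat -> V3),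
    (2 <= n)%nat ->
    (forall i, (i < n)%nat -> 0 < m i) ->
    (forall i, (i < n)%nat -> onH2 (q0 i)) ->
    collisionless n q0 ->
    ~ is_solution n m (fun i (_ : R) => q0 i).
Proof.
  intros n m q0 Hn Hm HH Hc [v [a [Hd Hsol]]].
  destruct (max_z q0 n) as [i [Hi Hmax]]; [lia|].
  destruct (Hd i Hi) as [Dq Dv].
  assert (Vx : forall t, vx (v i t) = 0)
    by (apply (deriv_const_zero (vx (q0 i))); intro t; apply (Dq t)).
  assert (Vy : forall t, vy (v i t) = 0)
    by (apply (deriv_const_zero (vy (q0 i))); intro t; apply (Dq t)).
  assert (Vz : forall t, vz (v i t) = 0)
    by (apply (deriv_const_zero (vz (q0 i))); intro t; apply (Dq t)).
  assert (Az : vz (a i 0) = 0).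
  { apply (uniqueness_limite (fun s => vz (v i s)) 0).
    apply (Dv 0).
    replace (fun s => vz (v i s)) with (fct_cte 0).
    apply derivable_pt_lim_const.
    apply functional_extensionality; intro s; rewrite Vz; reflexivity. }
  destruct (Hsol 0) as [_ Hs]. destruct (Hs i Hi) as [_ [_ Ha]].
  rewrite Ha in Az. unfold vadd, vscale, lor in Az; simpl in Az.
  rewrite Vx, Vy, Vz in Az.
  assert (Hf : vz (force n m q0 i) < 0).
  { unfold force. apply vz_vsum_neg.
    - intros j Hj. destruct (Nat.eq_dec j i) as [->|Hji]; simpl; [lra|].
      apply Rlt_le. apply term_neg;
        [apply Hm; lia | apply HH; lia | apply HH; lia | apply Hc; lia | apply Hmax; lia].
    - destruct (Nat.eq_dec i 0) as [->|Hi0].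
      + exists 1%nat. split; [lia|]. destruct (Nat.eq_dec 1 0); [lia|].
        apply term_neg;
        [apply Hm; lia | apply HH; lia | apply HH; lia | apply Hc; lia | apply Hmax; lia].
      + exists 0%nat. split; [lia|]. destruct (Nat.eq_dec 0 i); [lia|].
        apply term_neg;
        [apply Hm; lia | apply HH; lia | apply HH; lia | apply Hc; lia | apply Hmax; lia]. }
  change (fun j : nat => q0 j) with q0 in Az. lra.
Qed.
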